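(* Let $f:\mathbb{R}\to\mathbb{R}$ be a function, let $I\subset\mathbb{R}$ be an interval, and let $\Phi$ be a Young function satisfying the $\nabla_2$-condition. If there exists $D>0$ such that \[ |f(x)-f(y)|\le\left\{\Phi\left(\frac{1}{D|x-y|}\right)\right\}^{-1} \] for all $x,y\in I$ with $x\neq y$, then $f$ is constant on $I$.
   Context: A Young function is a map $\Phi:[0,\infty)\to[0,\infty)$ that is positive on $(0,\infty)$, convex, with $\lim_{t\downarrow0}\Phi(t)=\Phi(0)=0$. $\Phi$ satisfies the $\nabla_2$-condition if there is a constant $k>1$ with $\Phi(t)\le\frac{1}{2k}\Phi(kt)$ for all $t>0$. *)

(* Defs.v *)
From HB Require Import structures.
From mathcomp Require Import all_boot all_order all_algebra.
From mathcomp Require Import all_classical all_reals all_analysis.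
Set Implicit Arguments. Unset Strict Implicit. Unset Printing Implicit Defensive.
Import Order.TTheory GRing.Theory Num.Theory.
Import numFieldNormedType.Exports.
Local Open Scope ring_scope.
Local Open Scope classical_set_scope.

(* A Young function Phi : [0,oo) -> [0,oo), represented as Phi : R -> R whose
   values outside [0,oo) are irrelevant. *)
Definition young_function (R : realType) (Phi : R -> R) : Prop :=
  [/\ Phi 0 = 0,
      (forall t : R, 0 < t -> 0 < Phi t),
      (forall (x y l : R), 0 <= x -> 0 <= y -> 0 <= l -> l <= 1 ->
          Phi (l * x + (1 - l) * y) <= l * Phi x + (1 - l) * Phi y) &
      Phi t @[t --> 0^'+] --> 0].

Definition nabla2 (R : realType) (Phi : R -> R) : Prop :=
  exists k : R, 1 < k /\ forall t : R, 0 < t -> Phi t <= (2 * k)^-1 * Phi (k * t).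

(* Main.v *)
Require Import Defs.
From HB Require Import structures.
From mathcomp Require Import all_boot all_order all_algebra.
From mathcomp Require Import all_classical all_reals all_analysis.
From mathcomp Require Import ring lra.
Import Order.TTheory GRing.Theory Num.Theory.
Import numFieldNormedType.Exports.
Local Open Scope ring_scope.

Lemma itv_conv (R : realType) (I : interval R) (x y l : R) :
  x \in I -> y \in I -> 0 <= l -> l <= 1 -> x + l * (y - x) \in I.
Proof.
move=> xI yI l0 l1.
have hI := @interval_is_interval R I.
have E : forall u v z, u \in I -> v \in I -> u <= z <= v -> z \in I.
  by move=> u v z uI vI H; exact: (hI u v uI vI z H).
case: (lerP x y) => hxy.
- apply: (E x y) => //; apply/andP; split.
    by rewrite lerDl mulr_ge0 // subr_ge0.
  have : l * (y - x) <= 1 * (y - x) by rewrite ler_wpM2r // subr_ge0.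
  by rewrite mul1r; lra.
- apply: (E y x) => //; apply/andP; split.
    have : l * (x - y) <= 1 * (x - y) by rewrite ler_wpM2r // subr_ge0 ltW.
    by rewrite mul1r; nra.
  have : 0 <= l * (x - y) by rewrite mulr_ge0 // subr_ge0 ltW.
  nra.
Qed.

Lemma phi_scale (R : realType) (Phi : R -> R) (s t : R) :
  young_function Phi -> 1 <= s -> 0 <= t -> s * Phi t <= Phi (s * t).
Proof.
case=> P0 Ppos Pconv _ s1 t0.
have s0 : 0 < s by lra.
have l0 : 0 <= s^-1 by rewrite invr_ge0; lra.
have l1 : s^-1 <= 1 by rewrite invf_le1.
have := Pconv (s * t) 0 s^-1 (mulr_ge0 (ltW s0) t0) (lexx 0) l0 l1.
rewrite mulr0 addr0 P0 mulr0 addr0 mulrA mulVf ?gt_eqF // mul1r => H.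
have := ler_wpM2l (ltW s0) H.
by rewrite mulrA mulfV ?gt_eqF // mul1r.
Qed.

Lemma phi_pow (R : realType) (Phi : R -> R) (k t : R) (n : nat) :
  1 < k -> (forall u, 0 < u -> Phi u <= (2 * k)^-1 * Phi (k * u)) ->
  (forall u, 0 < u -> 0 < Phi u) -> 0 < t ->
  (2 * k) ^+ n * Phi t <= Phi (k ^+ n * t).
Proof.
move=> k1 hk Ppos t0; elim: n => [|n IH]; first by rewrite !expr0 !mul1r.
have k0 : 0 < k by lra.
have u0 : 0 < k ^+ n * t by rewrite mulr_gt0 // exprn_gt0.
have := hk _ u0.
have k2 : 0 < 2 * k by lra.
move=> H; have := ler_wpM2l (ltW k2) H.
rewrite mulVKf ?gt_eqF // => H2.
rewrite mulrA -exprS in H2.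
apply: le_trans H2.
by rewrite exprS -mulrA ler_wpM2l // ltW.
Qed.

Theorem lemma5p4 (R : realType) (f : R -> R) (I : interval R) (Phi : R -> R)
  (hPhi : young_function Phi) (hnab : nabla2 Phi)
  (D : R) (hD : 0 < D)
  (hf : forall x y : R, x \in I -> y \in I -> x != y ->
          `|f x - f y| <= (Phi ((D * `|x - y|)^-1))^-1) :
  forall x y : R, x \in I -> y \in I -> f x = f y.
Proof.
move=> x y xI yI.
case: (eqVneq x y) => [->//|nxy].
case: hnab => k [k1 hk].
case: (hPhi) => _ Ppos _ _.
have k0 : 0 < k by lra.
set h := `|x - y|.
have h0 : 0 < h by rewrite normr_gt0 subr_eq0.
set a := (D * h)^-1.
have a0 : 0 < a by rewrite invr_gt0 mulr_gt0.
set P := Phi a.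
have P0 : 0 < P by exact: Ppos.
have key : forall n : nat, `|f x - f y| * P <= (2 ^+ n)^-1.
  move=> n.
  have kn0 : 0 < k ^+ n by rewrite exprn_gt0.
  pose N := Num.Def.archi_bound (k ^+ n).
  have kN : k ^+ n < N%:R by apply: archi_boundP; exact: ltW.
  have N0 : 0 < N%:R :> R by apply: lt_trans kN.
  have NN0 : N%:R != 0 :> R by rewrite gt_eqF.
  set q := Phi (N%:R * a).
  have qge : N%:R * 2 ^+ n * P <= q.
    have s1 : 1 <= N%:R / k ^+ n by rewrite ler_pdivlMr // mul1r ltW.
    have := @phi_scale _ _ _ _ hPhi s1 (ltW (mulr_gt0 kn0 a0)).
    rewrite mulrA divfK ?gt_eqF // => H1.
    apply: le_trans H1.
    have := @phi_pow _ _ _ _ n k1 hk Ppos a0.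
    rewrite -/P => H2.
    have H3 := ler_wpM2l (ltW (divr_gt0 N0 kn0)) H2.
    apply: le_trans H3.
    rewrite exprMn; rewrite le_eqVlt; apply/orP; left; apply/eqP; field.
    by rewrite gt_eqF.
  have q0 : 0 < q by exact: Ppos (mulr_gt0 N0 a0).
  pose d := (y - x) / N%:R.
  have d0 : d != 0 by rewrite /d mulf_neq0 ?invr_eq0 // subr_eq0 eq_sym.
  have zI : forall m, (m <= N)%N -> x + m%:R * d \in I.
    move=> m hm.
    have -> : m%:R * d = (m%:R / N%:R) * (y - x) by rewrite /d; field.
    apply: itv_conv => //.
    by rewrite ler_pdivrMr // mul1r ler_nat.
  have step : forall m, (m < N)%N ->
      `|f (x + m%:R * d) - f (x + m.+1%:R * d)| <= q^-1.
    move=> m hm.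
    have e : x + m%:R * d - (x + m.+1%:R * d) = - d by rewrite -addn1 natrD; ring.
    have ne : x + m%:R * d != x + m.+1%:R * d.
      by apply/negP => /eqP E; move: e; rewrite E subrr => /eqP; rewrite eq_sym oppr_eq0 (negPf d0).
    apply: le_trans (hf _ _ (zI _ (ltnW hm)) (zI _ hm) ne) _.
    rewrite e normrN /d normrM normfV normr_nat distrC -/h.
    have -> : (D * (h / N%:R))^-1 = N%:R * a by rewrite /a; field; rewrite ?gt_eqF.
    by [].
  have tele : forall m, (m <= N)%N -> `|f x - f (x + m%:R * d)| <= m%:R * q^-1.
    elim=> [|m IH] Hm; first by rewrite mul0r addr0 subrr normr0 mul0r.
    apply: le_trans (ler_distD (f (x + m%:R * d)) _ _) _.
    have -> : m.+1%:R * q^-1 = m%:R * q^-1 + q^-1 by rewrite -addn1 natrD mulrDl mul1r.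
    apply: lerD; first exact: IH (ltnW Hm).
    exact: step.
  have := tele N (leqnn N).
  have -> : x + N%:R * d = y by rewrite /d; field.
  move=> H.
  apply: le_trans (ler_wpM2r (ltW P0) H) _.
  have p2 : 0 < 2 ^+ n :> R by rewrite exprn_gt0.
  rewrite -[(2 ^+ n)^-1]mul1r ler_pdivlMr //.
  have -> : N%:R * q^-1 * P * 2 ^+ n = (N%:R * 2 ^+ n * P) / q by field; rewrite gt_eqF.
  by rewrite ler_pdivrMr // mul1r.
set c := `|f x - f y| * P.
have c0 : 0 <= c by rewrite mulr_ge0 // ltW.
have cz : c = 0.
  apply/eqP; rewrite eq_le c0 andbT leNgt; apply/negP => cp.
  pose n := Num.Def.archi_bound c^-1.
  have h1 : c^-1 < n%:R by apply: archi_boundP; rewrite invr_ge0.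
  have h2 : n%:R < 2 ^+ n :> R by rewrite -natrX ltr_nat ltn_expl.
  have p2 : 0 < 2 ^+ n :> R by rewrite exprn_gt0.
  have h3 : 1 < c * 2 ^+ n.
    have := lt_trans h1 h2; rewrite -(ltr_pM2l cp) mulfV ?gt_eqF //.
  have := ler_wpM2r (ltW p2) (key n); rewrite -/c mulVf ?gt_eqF // => h4.
  lra.
move: cz => /eqP; rewrite /c mulf_eq0 (gt_eqF P0) orbF normr_eq0 subr_eq0.
by move/eqP.
Qed.
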